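(* Let $k$ be a binary kernel on a non-empty set $\mathcal X$. Then the relation $\sim_k$ is a partial equivalence relation, i.e., it is (i) symmetric and (ii) transitive.
   Context: A kernel on $\mathcal X$ is a symmetric positive semidefinite function $k:\mathcal X\times\mathcal X\to\mathbb R$. A kernel $k$ is binary if $k(x,y)\in\{0,1\}$ for all $x,y\in\mathcal X$. The relation induced by a binary kernel $k$ is $\sim_k=\{(x,y)\in\mathcal X\times\mathcal X : k(x,y)=1\}$. *)

(* Defs.v *)
From Stdlib Require Import Reals List.
Open Scope R_scope.

Definition quad_form {X : Type} (k : X -> X -> R) (n : nat)
  (xs : nat -> X) (cs : nat -> R) : R :=
  fold_right Rplus 0
    (map (fun i => fold_right Rplus 0
       (map (fun j => cs i * cs j * k (xs i) (xs j)) (seq 0 n))) (seq 0 n)).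

Definition is_kernel {X : Type} (k : X -> X -> R) : Prop :=
  (forall x y, k x y = k y x) /\
  (forall (n : nat) (xs : nat -> X) (cs : nat -> R), 0 <= quad_form k n xs cs).

Definition is_binary {X : Type} (k : X -> X -> R) : Prop :=
  forall x y, k x y = 0 \/ k x y = 1.

Definition rel_k {X : Type} (k : X -> X -> R) (x y : X) : Prop := k x y = 1.

(* Main.v *)
Require Import Defs.
From Stdlib Require Import Reals Lra.

Theorem lemma2 (X : Type) (x0 : X) (k : X -> X -> R)
  (hk : is_kernel k) (hb : is_binary k) :
  (forall x y, rel_k k x y -> rel_k k y x) /\
  (forall x y z, rel_k k x y -> rel_k k y z -> rel_k k x z).
Proof.
  destruct hk as [hs hp]. unfold rel_k. split.
  - intros x y H. rewrite hs. exact H.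
  - intros x y z H1 H2.
    destruct (hb x z) as [H|H]; [|exact H].
    exfalso.
    pose proof (hp 3%nat (fun i => match i with 0%nat => x | 1%nat => y | _ => z end)
                  (fun i => match i with 1%nat => -1 | _ => 1 end)) as Q.
    unfold quad_form in Q. simpl in Q.
    rewrite (hs y x), (hs z x), (hs z y) in Q.
    destruct (hb x x) as [A|A]; destruct (hb y y) as [B|B]; destruct (hb z z) as [C|C];
    rewrite ?A, ?B, ?C, H, H1, H2 in Q; lra.
Qed.
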